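(* Let $n\ge2$, $s\ge1$, and let $f:\mathbb{R}_{\ge0}\to\mathbb{R}_{\ge0}$ be super-additive with $c_f[s]<\infty$. Let $x(1),\ldots,x(s)\in\mathbb{R}^n_{\ge0}$, $x=\sum_{j=1}^s x(j)$, and let $e_1,\ldots,e_n>0$ be fixed reals. Let $i^*=\arg\max_{i}e_i^{-1}f(x_i)$ and suppose that for some constant $C>0$, $$\sum_{i=1}^n e_i^{-1}f(x_i)\le (C\ln^2 n)\cdot e_{i^*}^{-1}f(x_{i^*})\quad\text{and}\quad f(x_{i^*})>0.$$ For each server $j$ with $\sum_i e_i^{-1}f(x_i(j))>0$, let $\mathrm{SC}_j$ be the set of values of $N$ independent draws of a random index $\mathbf{i}\in[n]$ with $\Pr[\mathbf{i}=i]=e_i^{-1}f(x_i(j))/\sum_{i'}e_{i'}^{-1}f(x_{i'}(j))$ (draws independent across servers); for other servers let $\mathrm{SC}_j=\emptyset$. If $N\ge 32C\ln^3 n\cdot c_f[s]/s$, then $i^*\in\bigcup_j \mathrm{SC}_j$ with probability at least $1-1/n^4$.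
   Context: $f$ is super-additive if $f(x+y)\ge f(x)+f(y)$ for all $x,y\ge0$. For an integer $s\ge1$, $c_f[s]$ denotes the smallest real number such that $f(y_1+\cdots+y_s)\le\frac{c_f[s]}{s}\big(\sqrt{f(y_1)}+\cdots+\sqrt{f(y_s)}\big)^2$ for all $y_1,\ldots,y_s\ge0$. $\ln$ is the natural logarithm. *)

(* Defs.v *)
From HB Require Import structures.
From mathcomp Require Import all_boot all_order all_algebra.
From mathcomp Require Import reals exp.
Set Implicit Arguments. Unset Strict Implicit. Unset Printing Implicit Defensive.
Import Order.TTheory GRing.Theory Num.Theory.
Local Open Scope ring_scope.

Section Defs.
Variable R : realType.

Definition superadditive (f : R -> R) :=
  forall x y, 0 <= x -> 0 <= y -> f x + f y <= f (x + y).

Definition cf_ineq (f : R -> R) (s : nat) (c : R) :=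
  forall y : 'I_s -> R, (forall j, 0 <= y j) ->
    f (\sum_(j < s) y j) <= c / s%:R * (\sum_(j < s) Num.sqrt (f (y j))) ^+ 2.

(* c = c_f[s] (the smallest such real; existence of it encodes c_f[s] < oo) *)
Definition is_cf (f : R -> R) (s : nat) (c : R) :=
  cf_ineq f s c /\ forall c', cf_ineq f s c' -> c <= c'.

Definition server_mass n s (f : R -> R) (e : 'I_n -> R) (x : 'I_s -> 'I_n -> R)
  (j : 'I_s) : R := \sum_(i < n) (e i)^-1 * f (x j i).

(* sampling distribution on [n] for server j; for servers with zero mass
   the draws are irrelevant (SC_j is empty), we use the uniform law *)
Definition draw_prob n s (f : R -> R) (e : 'I_n -> R) (x : 'I_s -> 'I_n -> R)
  (j : 'I_s) (i : 'I_n) : R :=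
  if 0 < server_mass f e x j then (e i)^-1 * f (x j i) / server_mass f e x j
  else n%:R^-1.

Definition outcome_weight n s N (f : R -> R) (e : 'I_n -> R)
  (x : 'I_s -> 'I_n -> R) (w : {ffun 'I_s * 'I_N -> 'I_n}) : R :=
  \prod_(p : 'I_s * 'I_N) draw_prob f e x p.1 (w p).

Definition SC n s N (f : R -> R) (e : 'I_n -> R) (x : 'I_s -> 'I_n -> R)
  (w : {ffun 'I_s * 'I_N -> 'I_n}) (j : 'I_s) : {set 'I_n} :=
  if 0 < server_mass f e x j then [set w (j, k) | k : 'I_N] else set0.

Definition prob_hit n s N (f : R -> R) (e : 'I_n -> R) (x : 'I_s -> 'I_n -> R)
  (i : 'I_n) : R :=
  \sum_(w : {ffun 'I_s * 'I_N -> 'I_n} | i \in \bigcup_(j < s) SC f e x w j)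
     outcome_weight f e x w.

End Defs.

(* Main.v *)
Require Import Defs.
From HB Require Import structures.
From mathcomp Require Import all_boot all_order all_algebra.
From mathcomp Require Import reals exp sequences.
From mathcomp Require Import lra ring.
Import Order.TTheory GRing.Theory Num.Theory.
Local Open Scope ring_scope.
Lemma cs_sum (R : realFieldType) m (u v : 'I_m -> R) :
  (\sum_j u j * v j) ^+ 2 <= (\sum_j u j ^+ 2) * (\sum_j v j ^+ 2).
Proof.
set U := \sum_j u j ^+ 2; set W := \sum_j u j * v j; set V := \sum_j v j ^+ 2.
have quad : forall r, 0 <= r ^+ 2 * U - 2 * r * W + V.
  move=> r.
  have -> : r ^+ 2 * U - 2 * r * W + V = \sum_j (r * u j - v j) ^+ 2.
    rewrite (eq_bigr (fun j => r ^+ 2 * u j ^+ 2 + (- (2 * r)) * (u j * v j) + v j ^+ 2)); last by move=> j _; ring.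
    by rewrite !big_split /= -!mulr_sumr /U /W /V; ring.
  by apply: sumr_ge0 => j _; apply: sqr_ge0.
have U0 : 0 <= U by apply: sumr_ge0 => j _; apply: sqr_ge0.
have V0 : 0 <= V by apply: sumr_ge0 => j _; apply: sqr_ge0.
have [Ueq|Upos] := eqVneq U 0.
  have uz : forall j, u j = 0.
    move=> j; apply/eqP; rewrite -sqrf_eq0; apply/eqP.
    by apply: (psumr_eq0P (P := xpredT) (fun j _ => sqr_ge0 (u j)) Ueq).
  have -> : W = 0 by rewrite /W big1 // => j _; rewrite uz mul0r.
  by rewrite Ueq expr0n /= mul0r.
have Up : 0 < U by rewrite lt_def Upos U0.
have h := quad (W / U).
have hr : U * (W / U) = W by rewrite mulrC divfK.
set r := W / U in h hr.
nra.
Qed.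

Lemma sup_sum (R : realType) (f : R -> R) m (F : 'I_m -> R) :
  (forall y, 0 <= y -> 0 <= f y) -> superadditive f ->
  (forall j, 0 <= F j) -> \sum_j f (F j) <= f (\sum_j F j).
Proof.
move=> f0 sup; elim: m F => [|m IH] F F0.
  by rewrite !big_ord0 f0.
rewrite !big_ord_recr /=.
apply: le_trans (sup _ _ _ _); last 2 first.
- by apply: sumr_ge0.
- by [].
by rewrite lerD2r; apply: IH.
Qed.
Theorem lemma4p1 (R : realType) (n s N : nat) (f : R -> R) (cfs : R)
  (x : 'I_s -> 'I_n -> R) (e : 'I_n -> R) (istar : 'I_n) (C : R) :
  (2 <= n)%N -> (1 <= s)%N ->
  (forall y, 0 <= y -> 0 <= f y) ->
  superadditive f ->
  is_cf f s cfs ->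
  (forall j i, 0 <= x j i) ->
  (forall i, 0 < e i) ->
  let xs := fun i : 'I_n => \sum_(j < s) x j i in
  (forall i, (e i)^-1 * f (xs i) <= (e istar)^-1 * f (xs istar)) ->
  0 < C ->
  \sum_(i < n) (e i)^-1 * f (xs i)
     <= (C * ln (n%:R) ^+ 2) * ((e istar)^-1 * f (xs istar)) ->
  0 < f (xs istar) ->
  32 * C * ln (n%:R) ^+ 3 * cfs / s%:R <= N%:R ->
  1 - (n%:R ^+ 4)^-1 <= prob_hit N f e x istar.
Proof.
move=> hn hs f0 sup hcf x0 e0 xs hmax hC hsum hfs hN.
pose M j := server_mass f e x j.
pose d j i := draw_prob f e x j i.
pose a j := (e istar)^-1 * f (x j istar).
pose t j := if 0 < M j then d j istar else 0.
have ei0 : forall i, 0 <= (e i)^-1 by move=> i; rewrite invr_ge0 ltW.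
have term0 : forall j i, 0 <= (e i)^-1 * f (x j i).
  by move=> j i; rewrite mulr_ge0 // f0.
have M0 : forall j, 0 <= M j by move=> j; apply: sumr_ge0 => i _.
have a0 : forall j, 0 <= a j by move=> j; apply: term0.
have aM : forall j, a j <= M j.
  move=> j; rewrite /M /server_mass (bigD1 istar) //= lerDl.
  by apply: sumr_ge0 => i _.
have tM : forall j, a j = t j * M j.
  move=> j; rewrite /t /d /draw_prob -/(M j); case: ifP => Mp.
    by rewrite Mp divfK // gt_eqF.
  have : M j = 0 by apply/eqP; rewrite eq_le M0 andbT leNgt Mp.
  by move=> Mz; rewrite mul0r; apply/eqP; rewrite eq_le a0 andbT -Mz aM.
have t0 : forall j, 0 <= t j.
  move=> j; rewrite /t /d /draw_prob; case: ifP => Mp //.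
  have Mp' : 0 < server_mass f e x j := Mp.
  by rewrite Mp' divr_ge0 // ltW.
have n0 : (n%:R : R) != 0 by rewrite pnatr_eq0 -lt0n (leq_trans _ hn).
have sum_d : forall j, \sum_i d j i = 1.
  move=> j; rewrite /d /draw_prob; case Mp : (0 < server_mass f e x j).
    by rewrite -mulr_suml -/(server_mass f e x j) divff // gt_eqF.
  by rewrite sumr_const card_ord -(mulr_natr (n%:R^-1)) mulVf.

have d0 : forall j i, 0 <= d j i.
  move=> j i; rewrite /d /draw_prob; case: ifP => _.
    by rewrite divr_ge0 // M0.
  by rewrite invr_ge0.
have t1 : forall j, t j <= 1.
  move=> j; rewrite /t; case: ifP => // _.
  rewrite -(sum_d j) (bigD1 istar) //= lerDl.
  by apply: sumr_ge0 => i _.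
pose hit (w : {ffun 'I_s * 'I_N -> 'I_n}) := istar \in \bigcup_(j < s) SC f e x w j.
have tot : \sum_(w : {ffun 'I_s * 'I_N -> 'I_n}) outcome_weight f e x w = 1.
  rewrite /outcome_weight.
  rewrite -(bigA_distr_bigA (fun (p : 'I_s * 'I_N) (i : 'I_n) => d p.1 i)) /=.
  by apply: big1 => p _; apply: sum_d.
have spl : \sum_(w : {ffun 'I_s * 'I_N -> 'I_n}) outcome_weight f e x w
    = prob_hit N f e x istar + \sum_(w | ~~ hit w) outcome_weight f e x w.
  by rewrite /prob_hit (bigID hit) /=.
pose g j (i : 'I_n) : R := if (0 < M j) && (i == istar) then 0 else 1.
have miss_eq : \sum_(w | ~~ hit w) outcome_weight f e x w
    = \prod_(p : 'I_s * 'I_N) (1 - t p.1).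
  rewrite big_mkcond /=.
  transitivity (\sum_(w : {ffun 'I_s * 'I_N -> 'I_n})
                   \prod_p (d p.1 (w p) * g p.1 (w p))).
    apply: eq_bigr => w _; rewrite /outcome_weight.
    case: (boolP (hit w)) => hw /=.
    - move/bigcupP: hw => [j _]; rewrite /SC; case: ifP => Mj; last by rewrite in_set0.
      move/imsetP => [k _ ek].
      symmetry; rewrite (bigD1 (j, k)) //= /g -ek.
      rewrite (_ : (0 < M j) && (istar == istar) = true); last by rewrite eqxx andbT; exact: Mj.
      by rewrite mulr0 mul0r.
    - apply: eq_bigr => -[j k] _ /=; rewrite /g ifF ?mulr1 //.
      apply/negbTE/negP => /andP[Mp /eqP wp].
      move/negP: hw; apply; apply/bigcupP; exists j => //.
      rewrite /SC (_ : 0 < server_mass f e x j = true); last exact: Mp.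
      by apply/imsetP; exists k.
  rewrite -(bigA_distr_bigA (fun (p : 'I_s * 'I_N) (i : 'I_n) => d p.1 i * g p.1 i)) /=.
  apply: eq_bigr => p _; rewrite /g /t; case Mp : (0 < M p.1) => /=.
    rewrite (bigD1 istar) //= eqxx mulr0 add0r.
    rewrite (eq_bigr (fun i => d p.1 i)); last by move=> i /negbTE ->; rewrite mulr1.
    have := sum_d p.1; rewrite (bigD1 istar) //= => h; rewrite -h; ring.
  by rewrite (eq_bigr (fun i => d p.1 i)) ?sum_d ?subr0 // => i _; rewrite mulr1.
have sumt : N%:R * \sum_j t j = \sum_(p : 'I_s * 'I_N) t p.1.
  rewrite -(pair_bigA _ (fun (j : 'I_s) (k : 'I_N) => t j)) /= mulr_sumr.
  by apply: eq_bigr => j _; rewrite sumr_const card_ord mulr_natl.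
have miss_le : \prod_(p : 'I_s * 'I_N) (1 - t p.1) <= expR (- (N%:R * \sum_j t j)).
  rewrite sumt -sumrN expR_sum; apply: ler_prod => p _.
  apply/andP; split; first by rewrite subr_ge0.
  by move: (expR_ge1Dx (- t p.1)); lra.
pose L := ln (n%:R : R).
have Lpos : 0 < L by rewrite /L ln_gt0 // ltr1n.
have key : 4 * L <= N%:R * \sum_j t j.
  pose T := \sum_j M j.
  pose S := \sum_j Num.sqrt (f (x j istar)).
  pose ei := (e istar)^-1.
  pose fs := f (xs istar).
  have eip : 0 < ei by rewrite /ei invr_gt0.
  have T0 : 0 <= T by apply: sumr_ge0.
  have St0 : 0 <= \sum_j t j by apply: sumr_ge0.
  have hT : T <= \sum_(i < n) (e i)^-1 * f (xs i).
    rewrite /T /M /server_mass exchange_big /=; apply: ler_sum => i _.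
    rewrite -mulr_sumr ler_wpM2l //.
    exact: (@sup_sum R f s (fun j => x j i) f0 sup (fun j => x0 j i)).
  have hc : fs <= cfs / s%:R * S ^+ 2 := hcf.1 _ (fun j => x0 j istar).
  have spos : 0 < (s%:R : R) by rewrite ltr0n.
  have F1 : fs * s%:R <= cfs * S ^+ 2 by rewrite -ler_pdivlMr // mulrAC.
  have F2 : 32 * C * L ^+ 3 * cfs <= N%:R * s%:R by rewrite -ler_pdivrMr.
  have F4 : T <= C * L ^+ 2 * (ei * fs) by apply: le_trans hT hsum.
  have e1 : \sum_j Num.sqrt (t j) * Num.sqrt (M j) = Num.sqrt ei * S.
    rewrite /S mulr_sumr; apply: eq_bigr => j _.
    by rewrite -sqrtrM // -tM sqrtrM.
  have e2 : \sum_j Num.sqrt (t j) ^+ 2 = \sum_j t j.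
    by apply: eq_bigr => j _; rewrite sqr_sqrtr.
  have e3 : \sum_j Num.sqrt (M j) ^+ 2 = T.
    by apply: eq_bigr => j _; rewrite sqr_sqrtr.
  have F3 : ei * S ^+ 2 <= (\sum_j t j) * T.
    have CS := @cs_sum R s (fun j => Num.sqrt (t j)) (fun j => Num.sqrt (M j)).
    simpl in CS; rewrite e1 e2 e3 exprMn (sqr_sqrtr (ltW eip)) in CS. exact CS.
  set St := \sum_j t j in St0 F3 *.
  set S2 := S ^+ 2 in hc F1 F3.
  have S20 : 0 <= S2 by rewrite /S2 sqr_ge0.
  have fsp : 0 < fs := hfs.
  have L3 : L ^+ 3 = L * L ^+ 2 by rewrite exprS.
  have K0 : 0 < 32 * C * L ^+ 3 by rewrite !mulr_gt0 // exprn_gt0.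
  have G1 : 32 * C * L ^+ 3 * cfs * (ei * S2) <= N%:R * s%:R * (ei * S2).
    by rewrite ler_wpM2r // mulr_ge0 // ltW.
  have G2 : 32 * C * L ^+ 3 * (ei * (fs * s%:R)) <= 32 * C * L ^+ 3 * (ei * (cfs * S2)).
    apply: ler_wpM2l; first exact: ltW.
    by apply: ler_wpM2l; [exact: ltW | exact: F1].
  have G3 : 32 * C * L ^+ 3 * (ei * fs) <= N%:R * (ei * S2).
    rewrite -(ler_pM2r spos).
    have -> : 32 * C * L ^+ 3 * (ei * fs) * s%:R = 32 * C * L ^+ 3 * (ei * (fs * s%:R)) by ring.
    have -> : N%:R * (ei * S2) * s%:R = N%:R * s%:R * (ei * S2) by ring.
    apply: le_trans G2 _.
    have -> : 32 * C * L ^+ 3 * (ei * (cfs * S2)) = 32 * C * L ^+ 3 * cfs * (ei * S2) by ring.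
    exact: G1.
  have N0 : 0 <= (N%:R : R) by rewrite ler0n.
  have G4 : N%:R * (ei * S2) <= N%:R * (St * T) by rewrite ler_wpM2l.
  have G5 : 32 * L * T <= 32 * C * L ^+ 3 * (ei * fs).
    rewrite L3 (_ : 32 * C * (L * L ^+ 2) * (ei * fs) = 32 * L * (C * L ^+ 2 * (ei * fs))); last by ring.
    by rewrite ler_wpM2l // mulr_ge0 // ltW.
  have G6 : 0 < 32 * C * L ^+ 3 * (ei * fs) by rewrite mulr_gt0 // mulr_gt0.
  have Tp : 0 < T.
    rewrite lt_def T0 andbT; apply/eqP => Tz.
    have := le_trans G3 G4; rewrite Tz mulr0 mulr0; lra.
  have : 32 * L * T <= N%:R * St * T.
    by rewrite -[N%:R * St * T]mulrA; apply: le_trans G5 (le_trans G3 G4).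
  rewrite ler_pM2r // => H; lra.
have fin : expR (- (4 * L)) = (n%:R ^+ 4)^-1.
  by rewrite expRN expRM_natl /L lnK // posrE ltr0n (leq_trans _ hn).
have : prob_hit N f e x istar = 1 - \prod_(p : 'I_s * 'I_N) (1 - t p.1).
  by rewrite -miss_eq -tot spl; ring.
move=> ->.
have : expR (- (N%:R * \sum_j t j)) <= expR (- (4 * L)) by rewrite ler_expR lerN2.
rewrite fin; move: miss_le; lra.
Qed.
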